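(* Let $(F,H)$ be the unique local solution on its maximal interval $[0,T_{\max})$ of the Riccati system in the context, let $\Phi_F$ solve $$\Phi_F'(\tau)=(I_{N-1}\otimes\Lambda^{-1/2})F^\top(\tau)(I_{N-1}\otimes\Lambda^{-1/2})\Phi_F(\tau),\qquad\Phi_F(0)=I_{K(N-1)},$$ and define $\Psi_F(r;\tau)=\Phi_F(r)\Phi_F^{-1}(\tau)$ for $r,\tau\in[0,T_{\max})$. Then $\|\Psi_F(r;\tau)\|_{\mathrm{op}}\le1$ for every $0\le r\le\tau<T_{\max}$.
   Context: Riccati system: $F'=\Gamma\otimes(\alpha+(c\otimes I_K)^\top H)(\alpha+(c\otimes I_K)^\top H)^\top-F(I_{N-1}\otimes\Lambda^{-1})F$, $F(0)=0$; $H'=(\Gamma\otimes(\alpha+(c\otimes I_K)^\top H))\xi-F(I_{N-1}\otimes\Lambda^{-1})H$, $H(0)=0$. Here $N\ge2$, $K\le D$; $\gamma^1,\dots,\gamma^N>0$, $\gamma^N=\max_n\gamma^n$, $\bar\gamma=(\sum_n1/\gamma^n)^{-1}$; $c_n=\bar\gamma(1/\gamma^n-1/\gamma^N)$; $\Gamma:=\mathrm{diag}\{\gamma^1,\dots,\gamma^{N-1}\}-\tfrac1N\mathbb 1_{N-1}\mathbb 1_{N-1}^\top\mathrm{diag}\{\gamma^1-\gamma^N,\dots,\gamma^{N-1}-\gamma^N\}$; $\Lambda\in\mathbb R^{K\times K}$ symmetric positive definite with symmetric positive definite square root $\Lambda^{1/2}$; $\alpha\in\mathbb R^{K\times D}$;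 $\xi\in\mathbb R^{(N-1)D\times D}$. $\|\cdot\|_{\mathrm{op}}$ is the operator norm. *)

(* Defs.v *)
From HB Require Import structures.
From mathcomp Require Import all_boot all_order all_algebra.
From mathcomp Require Import all_classical all_reals all_analysis.
From mathcomp Require Export mxtens.
Set Implicit Arguments. Unset Strict Implicit. Unset Printing Implicit Defensive.
Import Order.TTheory GRing.Theory Num.Theory.
Import numFieldNormedType.Exports.
Local Open Scope ring_scope.
Local Open Scope classical_set_scope.

Section Defs.
Variable R : realType.

(* Indices of gamma are 1..N (gamma : nat -> R). *)

Definition gbar (N : nat) (g : nat -> R) : R :=
  (\sum_(1 <= n < N.+1) (g n)^-1)^-1.

Definition cvec (N : nat) (g : nat -> R) : 'cV[R]_(N.-1) :=
  \col_(i < N.-1) (gbar N g * ((g i.+1)^-1 - (g N)^-1)).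

(* Gamma = diag{g^1..g^{N-1}} - 1/N 1 1^T diag{g^1-g^N,..,g^{N-1}-g^N} *)
Definition Gam (N : nat) (g : nat -> R) : 'M[R]_(N.-1) :=
  \matrix_(i, j) ((i == j)%:R * g i.+1 - (N%:R)^-1 * (g j.+1 - g N)).

(* c (x) I_K, an (N-1)K x K matrix (1*K cast to K) *)
Definition cI (N K : nat) (g : nat -> R) : 'M[R]_(N.-1 * K, K) :=
  castmx (erefl, mul1n K) (cvec N g *t (1%:M : 'M[R]_K)).

Definition Aterm (N K D : nat) (g : nat -> R) (alpha : 'M[R]_(K, D))
  (H : 'M[R]_(N.-1 * K, D)) : 'M[R]_(K, D) :=
  alpha + (cI N K g)^T *m H.

Definition F_rhs (N K D : nat) (g : nat -> R) (Lam : 'M[R]_K)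
  (alpha : 'M[R]_(K, D)) (F : 'M[R]_(N.-1 * K)) (H : 'M[R]_(N.-1 * K, D))
  : 'M[R]_(N.-1 * K) :=
  Gam N g *t (Aterm g alpha H *m (Aterm g alpha H)^T)
  - F *m ((1%:M : 'M[R]_(N.-1)) *t invmx Lam) *m F.

Definition H_rhs (N K D : nat) (g : nat -> R) (Lam : 'M[R]_K)
  (alpha : 'M[R]_(K, D)) (xi : 'M[R]_(N.-1 * D, D))
  (F : 'M[R]_(N.-1 * K)) (H : 'M[R]_(N.-1 * K, D)) : 'M[R]_(N.-1 * K, D) :=
  (Gam N g *t Aterm g alpha H) *m xi
  - F *m ((1%:M : 'M[R]_(N.-1)) *t invmx Lam) *m H.

Definition Ivl (T : \bar R) : set R := [set t | 0 <= t /\ (t%:E < T)%E].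

Definition ode_sol {V : normedModType R} (T : \bar R) (f : R -> V -> V)
  (X0 : V) (X : R -> V) : Prop :=
  X 0 = X0 /\ {within Ivl T, continuous X} /\
  forall t, 0 < t -> (t%:E < T)%E -> is_derive t (1 : R) X (f t (X t)).

Definition riccati_sol (N K D : nat) (g : nat -> R) (Lam : 'M[R]_K)
  (alpha : 'M[R]_(K, D)) (xi : 'M[R]_(N.-1 * D, D)) (T : \bar R)
  (F : R -> 'M[R]_(N.-1 * K)) (H : R -> 'M[R]_(N.-1 * K, D)) : Prop :=
  ode_sol T (fun _ (FH : 'M[R]_(N.-1 * K) * 'M[R]_(N.-1 * K, D)) =>
               (F_rhs g Lam alpha FH.1 FH.2, H_rhs g Lam alpha xi FH.1 FH.2))
          (0, 0) (fun t => (F t, H t)).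

Definition spd (n : nat) (A : 'M[R]_n) : Prop :=
  A^T = A /\ forall x : 'cV[R]_n, x != 0 -> 0 < (x^T *m A *m x) 0 0.

Definition enorm (n : nat) (x : 'cV[R]_n) : R := Num.sqrt (\sum_i x i 0 ^+ 2).

Definition opnorm (m n : nat) (A : 'M[R]_(m, n)) : R :=
  sup [set enorm (A *m x) | x in [set x : 'cV[R]_n | enorm x <= 1]].

End Defs.

(* Main.v *)
Require Import Defs.
From HB Require Import structures.
From mathcomp Require Import all_boot all_order all_algebra.
From mathcomp Require Import all_classical all_reals all_analysis.
From mathcomp Require Import mxtens.
From mathcomp Require Import zify ring lra.
Import Order.TTheory GRing.Theory Num.Theory.
Import numFieldNormedType.Exports.
Local Open Scope ring_scope.

Section Alg.
Context {R : realType}.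
Local Open Scope classical_set_scope.

Lemma sum_delta n (e : 'I_n) (X : 'I_n -> R) :
  \sum_(d < n) (d == e)%:R * X d = X e.
Proof.
rewrite (bigD1 e) //= eqxx mul1r big1 ?addr0 // => d /negbTE ->.
by rewrite mul0r.
Qed.

Lemma sum_tens m n (F : 'I_(m * n) -> R) :
  \sum_(p < m * n) F p = \sum_(i < m) \sum_(j < n) F (@mxtens_index m n (i, j)).
Proof.
rewrite pair_big /=.
rewrite (reindex (@mxtens_unindex m n)) /=.
  by apply: eq_bigr => p _; rewrite mxtens_unindexK.
by exists (@mxtens_index m n) => x _; rewrite (mxtens_indexK, mxtens_unindexK).
Qed.

Lemma qform_entry n (w : 'cV[R]_n) (M : 'M[R]_n) :
  (w^T *m M *m w) 0 0 = \sum_(q < n) (\sum_(p < n) w p 0 * M p q) * w q 0.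
Proof.
rewrite mxE; apply: eq_bigr => q _; rewrite mxE; congr (_ * _).
by apply: eq_bigr => p _; rewrite mxE.
Qed.

Lemma gam_psd N (g : nat -> R) : (2 <= N)%N ->
  (forall n, (1 <= n <= N)%N -> 0 < g n) ->
  (forall n, (1 <= n <= N)%N -> g n <= g N) ->
  forall v : 'cV[R]_(N.-1), 0 <= (v^T *m Gam N g *m v) 0 0.
Proof.
move=> N2 gpos gle v.
rewrite qform_entry.
set s := \sum_(i < N.-1) v i 0.
set L := \sum_(i < N.-1) g i.+1 * v i 0.
set Q := \sum_(i < N.-1) g i.+1 * v i 0 ^+ 2.
set S := \sum_(i < N.-1) g i.+1.
have Nr : (0 : R) < N%:R by rewrite ltr0n (leq_trans _ N2).
have E : \sum_(q < N.-1) (\sum_(p < N.-1) v p 0 * Gam N g p q) * v q 0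
   = Q - N%:R^-1 * (s * L - g N * s ^+ 2).
  have E1 q : \sum_(p < N.-1) v p 0 * Gam N g p q
      = v q 0 * g q.+1 - N%:R^-1 * (g q.+1 - g N) * s.
    under eq_bigr do rewrite mxE mulrBr.
    rewrite sumrB; congr (_ - _).
      rewrite (bigD1 q) //= eqxx mul1r big1 ?addr0 // => p /negbTE pq.
      by rewrite pq mul0r mulr0.
    rewrite /s mulr_sumr; apply: eq_bigr => p _; ring.
  rewrite (eq_bigr _ (fun q _ => congr1 (fun x => x * v q 0) (E1 q))).
  rewrite (eq_bigr (fun q : 'I_N.-1 => g q.+1 * v q 0 ^+ 2 - (N%:R^-1 * s) * (g q.+1 * v q 0)
     + (N%:R^-1 * s * g N) * v q 0)); last by move=> q _; ring.
  rewrite big_split sumrB /= -!mulr_sumr.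
  change (Q - N%:R^-1 * s * L + N%:R^-1 * s * g N * s = Q - N%:R^-1 * (s * L - g N * s ^+ 2)).
  ring.
rewrite E.
set c := s / (2 * N%:R).
have E2 : Q - N%:R^-1 * (s * L - g N * s ^+ 2) =
  \sum_(i < N.-1) g i.+1 * (v i 0 - c) ^+ 2
  + s ^+ 2 / (4 * N%:R ^+ 2) * (4 * N%:R * g N - S).
  have -> : \sum_(i < N.-1) g i.+1 * (v i 0 - c) ^+ 2 = Q - 2 * c * L + c ^+ 2 * S.
    rewrite (eq_bigr (fun i : 'I_N.-1 => g i.+1 * v i 0 ^+ 2 - (2 * c) * (g i.+1 * v i 0)
       + c ^+ 2 * g i.+1)); last by move=> i _; ring.
    by rewrite big_split sumrB /= -!mulr_sumr.
  rewrite /c; field.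
  by rewrite gt_eqF.
rewrite E2; apply: addr_ge0.
  apply: sumr_ge0 => i _; apply: mulr_ge0; last exact: sqr_ge0.
  apply: ltW; apply: gpos; rewrite ltn0Sn /=.
  by have := ltn_ord i; lia.
apply: mulr_ge0; first by apply: divr_ge0; [exact: sqr_ge0| rewrite mulr_ge0 // ?exprn_ge0 // ltW].
rewrite subr_ge0.
have gN0 : 0 <= g N by apply: ltW; apply: gpos; lia.
apply: (@le_trans _ _ (\sum_(i < N.-1) g N)).
  apply: ler_sum => i _; apply: gle; rewrite ltn0Sn /=.
  by have := ltn_ord i; lia.
have h1 : (N.-1)%:R <= 4 * N%:R :> R by rewrite -natrM ler_nat; lia.
rewrite sumr_const card_ord -mulr_natr; nra.
Qed.


Lemma tens_psd p k d (G : 'M[R]_p) (a : 'M[R]_(k, d)) :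
  (forall v : 'cV[R]_p, 0 <= (v^T *m G *m v) 0 0) ->
  forall u : 'cV[R]_(p * k), 0 <= (u^T *m (G *t (a *m a^T)) *m u) 0 0.
Proof.
move=> Gpsd u.
have fact : G *t (a *m a^T) =
    ((@scalar_mx R p 1) *t a) *m (G *t (@scalar_mx R d 1)) *m ((@scalar_mx R p 1) *t a)^T.
  by rewrite trmx_tens trmx1 !tensmx_mul mul1mx !mulmx1.
rewrite fact.
set w := ((@scalar_mx R p 1) *t a)^T *m u.
have -> : u^T *m (((@scalar_mx R p 1) *t a) *m (G *t (@scalar_mx R d 1)) *m ((@scalar_mx R p 1) *t a)^T) *m u
   = w^T *m (G *t (@scalar_mx R d 1)) *m w.
  by rewrite /w trmx_mul trmxK !mulmxA.
clearbody w.
rewrite qform_entry sum_tens.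
have -> : \sum_(j < p) \sum_(e < d)
   (\sum_(q < p * d) w q 0 * (G *t (@scalar_mx R d 1)) q (@mxtens_index p d (j, e))) * w (@mxtens_index p d (j, e)) 0
  = \sum_(e < d) ((\col_i w (@mxtens_index p d (i, e)) 0)^T *m G *m
       (\col_i w (@mxtens_index p d (i, e)) 0)) 0 0.
  rewrite exchange_big /=; apply: eq_bigr => e _; rewrite qform_entry.
  apply: eq_bigr => j _; rewrite !mxE; congr (_ * _).
  rewrite sum_tens; apply: eq_bigr => i _; rewrite mxE.
  under eq_bigr do rewrite tensmxE !mxE.
  rewrite (bigD1 e) //= eqxx mulr1n mulr1 big1 ?addr0 // => d' /negbTE ->.
  by rewrite mulr0n mulr0 mulr0.
by apply: sumr_ge0 => e _; apply: Gpsd.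
Qed.

Lemma rinj_unit n (A : 'M[R]_n) :
  (forall v : 'rV[R]_n, v *m A = 0 -> v = 0) -> A \in unitmx.
Proof.
move=> h; rewrite -row_free_unit -kermx_eq0; apply/eqP/row_matrixP => i.
by rewrite row0; apply: h; rewrite -row_mul mulmx_ker row0.
Qed.

Lemma cinj_unit n (A : 'M[R]_n) :
  (forall x : 'cV[R]_n, A *m x = 0 -> x = 0) -> A \in unitmx.
Proof.
move=> h; rewrite -unitmx_tr; apply: rinj_unit => v hv.
have : A *m v^T = 0 by rewrite -(trmxK (A *m v^T)) trmx_mul trmxK hv trmx0.
by move/h => /(congr1 trmx); rewrite trmxK trmx0.
Qed.

Lemma sq_entry n (x : 'cV[R]_n) : (x^T *m x) 0 0 = \sum_i x i 0 ^+ 2.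
Proof. by rewrite mxE; apply: eq_bigr => i _; rewrite mxE expr2. Qed.

Lemma sq_ge0 n (x : 'cV[R]_n) : 0 <= (x^T *m x) 0 0.
Proof. by rewrite sq_entry; apply: sumr_ge0 => i _; exact: sqr_ge0. Qed.

Lemma sq_eq0 n (x : 'cV[R]_n) : (x^T *m x) 0 0 <= 0 -> x = 0.
Proof.
rewrite sq_entry => h; apply/matrixP => i j; rewrite [j]ord1 mxE.
apply/eqP; rewrite -sqrf_eq0 eq_le sqr_ge0 andbT.
apply: le_trans h; rewrite (bigD1 i) //= lerDl.
by apply: sumr_ge0 => k _; exact: sqr_ge0.
Qed.

Lemma spd_unit n (A : 'M[R]_n) : spd A -> A \in unitmx.
Proof.
move=> [_ hA]; apply: cinj_unit => x Ax; apply/eqP; apply: contraT => /hA.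
by rewrite -mulmxA Ax mulmx0 mxE ltxx.
Qed.

Lemma qform_tr n (x : 'cV[R]_n) (M : 'M[R]_n) :
  (x^T *m M^T *m x) 0 0 = (x^T *m M *m x) 0 0.
Proof.
have E : (x^T *m M^T *m x)^T = x^T *m M *m x by rewrite !trmx_mul !trmxK mulmxA.
by rewrite -E [RHS]mxE.
Qed.

Lemma is_derive_map (V W : normedModType R) (L : V -> W) (X : R -> V) (t : R) dX :
  continuous L -> (forall (k : R) x y, L (k *: (x - y)) = k *: (L x - L y)) ->
  is_derive t 1 X dX -> is_derive t 1 (L \o X) (L dX).
Proof.
move=> cL hL [d1 d2].
have c : (fun h : R => h^-1 *: ((X \o shift t) (h *: 1) - X t)) @ 0^' --> dX.
  by rewrite -d2; exact: d1.
have c2 := continuous_cvg _ (cL dX) c.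
have E : (fun h : R => h^-1 *: (((L \o X) \o shift t) (h *: 1) - (L \o X) t)) =
   L \o (fun h : R => h^-1 *: ((X \o shift t) (h *: 1) - X t)).
  by apply/funext => h /=; rewrite hL.
have c3 : (fun h : R => h^-1 *: (((L \o X) \o shift t) (h *: 1) - (L \o X) t)) @ 0^' --> L dX.
  rewrite E. exact: c2.
apply: DeriveDef; first exact: (cvgP _ c3).
exact: cvg_lim c3.
Qed.

Definition ederiv m n (t : R) (X : R -> 'M[R]_(m, n)) (dX : 'M[R]_(m, n)) :=
  forall i j, is_derive t (1 : R) (fun s => X s i j) (dX i j).
Arguments ederiv {m n}.

Lemma is_derive_ederiv {m n} (t : R) (X : R -> 'M[R]_(m, n)) dX :
  is_derive t 1 X dX -> ederiv t X dX.
Proof.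
move=> h i j.
apply: (@is_derive_map _ _ (fun M : 'M[R]_(m, n) => M i j) X t dX) => //.
  exact: coord_continuous.
by move=> k x y; rewrite !mxE.
Qed.

Lemma is_derive_fst (V W : normedModType R) (t : R) (X : R -> V) (Y : R -> W) dX dY :
  is_derive t 1 (fun s => (X s, Y s)) (dX, dY) -> is_derive t 1 X dX.
Proof.
move=> h.
apply: (@is_derive_map _ _ fst (fun s => (X s, Y s)) t (dX, dY) _ _ h) => //.
by move=> p; exact: cvg_fst.
Qed.

Lemma ederiv_cst {m n} (t : R) (C : 'M[R]_(m, n)) : ederiv t (fun _ => C) 0.
Proof.
move=> i j; rewrite mxE; exact: is_derive_cst.
Qed.

Lemma ederiv_mul {m n p} (t : R) (A : R -> 'M[R]_(m, n)) (B : R -> 'M[R]_(n, p)) dA dB :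
  ederiv t A dA -> ederiv t B dB ->
  ederiv t (fun s => A s *m B s) (dA *m B t + A t *m dB).
Proof.
move=> hA hB i j.
have -> : (fun s => (A s *m B s) i j) =
    \sum_(k < n) ((fun s => A s i k) * (fun s => B s k j)).
  by apply/funext => s; rewrite fct_sumE mxE.
apply: is_derive_eq.
  by apply: is_derive_sum => k; apply: is_deriveM; [exact: hA | exact: hB].
rewrite !mxE -big_split /=; apply: eq_bigr => k _ /=.
by rewrite addrC [_ *: dA i k]mulrC.
Qed.

Lemma ederiv_tr {m n} (t : R) (X : R -> 'M[R]_(m, n)) dX :
  ederiv t X dX -> ederiv t (fun s => (X s)^T) dX^T.
Proof.
move=> h i j.
have -> : (fun s => (X s)^T i j) = (fun s => X s j i).
  by apply/funext => s; rewrite mxE.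
by rewrite mxE; exact: h.
Qed.

Lemma ederiv_eq {m n} (t : R) (X : R -> 'M[R]_(m, n)) dX dY :
  ederiv t X dX -> dX = dY -> ederiv t X dY.
Proof. by move=> h <-. Qed.

Definition econt (A : set R) m n (X : R -> 'M[R]_(m, n)) :=
  forall i j, {within A, continuous (fun s => X s i j)}.
Arguments econt A {m n}.

Lemma cont_econt {A m n} (X : R -> 'M[R]_(m, n)) :
  {within A, continuous X} -> econt A X.
Proof.
move=> h i j x.
exact: (@continuous_comp (subspace A) _ _ X (fun M : 'M[R]_(m, n) => M i j) x (h x) (@coord_continuous R m n i j (X x))).
Qed.

Lemma cont_fst (A : set R) (V W : normedModType R) (X : R -> V) (Y : R -> W) :
  {within A, continuous (fun s => (X s, Y s))} -> {within A, continuous X}.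
Proof.
move=> h x.
exact: (@continuous_comp (subspace A) _ _ (fun s => (X s, Y s)) fst x (h x) (@cvg_fst _ _ _ _ _)).
Qed.

Lemma econt_cst {A m n} (C : 'M[R]_(m, n)) : econt A (fun _ => C).
Proof. by move=> i j x; exact: cst_continuous. Qed.

Lemma econt_mul {A m n p} (X : R -> 'M[R]_(m, n)) (Y : R -> 'M[R]_(n, p)) :
  econt A X -> econt A Y -> econt A (fun s => X s *m Y s).
Proof.
move=> hX hY i j x.
have -> : (fun s => (X s *m Y s) i j) =
    \sum_(k < n) ((fun s => X s i k) \* (fun s => Y s k j)).
  by apply/funext => s; rewrite fct_sumE mxE.
apply: (@big_ind _ (fun h : subspace A -> R => {for x, continuous h})).
- exact: cst_continuous.
- by move=> f g cf cg; exact: continuousD.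
- by move=> k _; apply: continuousM; [exact: hX | exact: hY].
Qed.

Lemma econt_tr {A m n} (X : R -> 'M[R]_(m, n)) :
  econt A X -> econt A (fun s => (X s)^T).
Proof.
move=> h i j.
have -> : (fun s => (X s)^T i j) = (fun s => X s j i).
  by apply/funext => s; rewrite mxE.
exact: h.
Qed.

Lemma gderiv_alg n (Bh V Fm P : 'M[R]_n) (u : 'cV[R]_n) :
  Bh^T = Bh -> Bh *m Bh = V -> V^T = V ->
  ((V *m Fm^T *m u)^T *m Fm + u^T *m (P - Fm *m V *m Fm)) *m u
    + (u^T *m Fm) *m (V *m Fm^T *m u)
  = u^T *m P *m u + (Bh *m Fm^T *m u)^T *m (Bh *m Fm^T *m u).
Proof.
move=> BhT BB VT.
have -> : (Bh *m Fm^T *m u)^T *m (Bh *m Fm^T *m u) = u^T *m Fm *m V *m Fm^T *m u.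
  by rewrite !trmx_mul trmxK BhT -BB !mulmxA.
rewrite !trmx_mul trmxK VT mulmxBr mulmxDl mulmxBl !mulmxA.
by rewrite [_ + (_ - _)]addrC subrK.
Qed.

Lemma fderiv_alg n (Bh Fm : 'M[R]_n) (y : 'cV[R]_n) : Bh^T = Bh ->
  ((Bh *m Fm^T *m Bh *m y)^T *m y + y^T *m (Bh *m Fm^T *m Bh *m y)) 0 0
  = 2 * ((Bh *m y)^T *m Fm *m (Bh *m y)) 0 0.
Proof.
move=> BhT.
have E1 : (Bh *m Fm^T *m Bh *m y)^T *m y = (Bh *m y)^T *m Fm *m (Bh *m y).
  by rewrite !trmx_mul trmxK BhT !mulmxA.
have E2 : y^T *m (Bh *m Fm^T *m Bh *m y) = (Bh *m y)^T *m Fm^T *m (Bh *m y).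
  by rewrite trmx_mul BhT !mulmxA.
by rewrite mxE E1 E2 qform_tr mulr2n mulrDl mul1r.
Qed.

End Alg.
Arguments econt {R} A {m n}.
Arguments ederiv {R m n}.
Arguments ederiv_mul {R m n p t A B dA dB}.
Arguments ederiv_tr {R m n t X dX}.
Arguments ederiv_eq {R m n t X dX dY}.
Arguments econt_mul {R A m n p X Y}.
Arguments econt_tr {R A m n X}.

Section Aux2.
Local Open Scope classical_set_scope.

Lemma itv_sub_Ivl (R : realType) (T : \bar R) (a b : R) :
  0 <= a -> (b%:E < T)%E -> `[a, b] `<=` Ivl T.
Proof.
move=> a0 bT y /=; rewrite ?inE /= ?in_itv /= => /andP[ay yb]; rewrite !bnd_simp in ay yb; split.
  exact: le_trans ay.
by apply: le_lt_trans bT; rewrite lee_fin.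
Qed.

Lemma mono_of_deriv (R : realType) (f df : R -> R) (a b : R) :
  a <= b -> {within `[a, b], continuous f} ->
  (forall c, a < c -> c < b -> is_derive c 1 f (df c) /\ 0 <= df c) ->
  f a <= f b.
Proof.
move=> ab cf hd.
have [->|aneb] := eqVneq a b; first by [].
have altb : a < b by rewrite lt_neqAle aneb ab.
have hd' : forall x, x \in `]a, b[%R -> is_derive x 1 f (df x).
  by move=> x; rewrite in_itv /= => /andP[h1 h2]; exact: (hd x h1 h2).1.
have [c] := MVT altb hd' cf.
rewrite in_itv /= => /andP[h1 h2] E.
rewrite -subr_ge0 E; apply: mulr_ge0; first exact: (hd c h1 h2).2.
by rewrite subr_ge0.
Qed.

End Aux2.

Local Open Scope classical_set_scope.

Theorem corollary7p8 (R : realType) (N K D : nat) (g : nat -> R)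
  (Lam Lamh : 'M[R]_K) (alpha : 'M[R]_(K, D)) (xi : 'M[R]_(N.-1 * D, D))
  (Tmax : \bar R) (F : R -> 'M[R]_(N.-1 * K)) (H : R -> 'M[R]_(N.-1 * K, D))
  (Phi : R -> 'M[R]_(N.-1 * K)) :
  (2 <= N)%N -> (K <= D)%N ->
  (forall n, (1 <= n <= N)%N -> 0 < g n) ->
  (forall n, (1 <= n <= N)%N -> g n <= g N) ->
  spd Lam -> spd Lamh -> Lamh *m Lamh = Lam ->
  (0 < Tmax)%E ->
  riccati_sol g Lam alpha xi Tmax F H ->
  (* [0, Tmax) is the maximal interval of existence *)
  (forall (T' : \bar R) (F' : R -> 'M[R]_(N.-1 * K))
          (H' : R -> 'M[R]_(N.-1 * K, D)),
      (Tmax < T')%E -> ~ riccati_sol g Lam alpha xi T' F' H') ->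
  ode_sol Tmax
    (fun t (P : 'M[R]_(N.-1 * K)) =>
       ((1%:M : 'M[R]_(N.-1)) *t invmx Lamh) *m (F t)^T
         *m ((1%:M : 'M[R]_(N.-1)) *t invmx Lamh) *m P)
    1%:M Phi ->
  forall r tau : R, 0 <= r -> r <= tau -> (tau%:E < Tmax)%E ->
    opnorm (Phi r *m invmx (Phi tau)) <= 1.
Proof.
move=> N2 KD gpos gle spdL spdLh LL T0 ric _ phis r tau r0 rtau tauT.
set Bh := ((1%:M : 'M[R]_(N.-1)) *t invmx Lamh).
set V := ((1%:M : 'M[R]_(N.-1)) *t invmx Lam).
have uLh : Lamh \in unitmx by exact: spd_unit.
have uL : Lam \in unitmx by rewrite -LL unitmx_mul uLh.
have invLL : invmx Lamh *m invmx Lamh = invmx Lam.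
  have h1 : invmx Lamh *m invmx Lamh *m Lam = 1%:M.
    by rewrite -LL mulmxA -(mulmxA (invmx Lamh) (invmx Lamh) Lamh) (mulVmx uLh) mulmx1 (mulVmx uLh).
  by rewrite -[LHS]mulmx1 -(mulmxV uL) mulmxA h1 mul1mx.
have BhT : Bh^T = Bh by rewrite /Bh trmx_tens trmx1 trmx_inv spdLh.1.
have BB : Bh *m Bh = V by rewrite /Bh /V tensmx_mul mulmx1 invLL.
have VT : V^T = V by rewrite -BB trmx_mul BhT.
case: ric => FH0 [cFH dFH].
have F0 : F 0 = 0 by have := congr1 fst FH0.
have cF : {within Ivl Tmax, continuous F} by exact: cont_fst cFH.
have dF : forall t, 0 < t -> (t%:E < Tmax)%E ->
    is_derive t 1 F (F_rhs g Lam alpha (F t) (H t)) by move=> t h1 h2; exact: is_derive_fst (dFH t h1 h2).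
case: phis => P0 [cP dP].
have cFe : econt (Ivl Tmax) F by apply: cont_econt.
have cPe : econt (Ivl Tmax) Phi by apply: cont_econt.
have key : forall (x : 'cV[R]_(N.-1 * K)) (a b : R), 0 <= a -> a <= b -> (b%:E < Tmax)%E ->
    ((Phi a *m x)^T *m (Phi a *m x)) 0 0 <= ((Phi b *m x)^T *m (Phi b *m x)) 0 0.
  move=> x.
  pose u s := Bh *m (Phi s *m x).
  pose gx s := ((u s)^T *m F s *m u s) 0 0.
  have eu : econt (Ivl Tmax) u := econt_mul (econt_cst Bh) (econt_mul cPe (econt_cst x)).
  have eg : econt (Ivl Tmax) (fun s => (u s)^T *m F s *m u s) :=
    econt_mul (econt_mul (econt_tr eu) cFe) eu.
  have eU : forall c, 0 < c -> (c%:E < Tmax)%E -> ederiv c u (V *m (F c)^T *m u c).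
    move=> c c0 cT.
    have eP : ederiv c Phi (Bh *m (F c)^T *m Bh *m Phi c) by apply: is_derive_ederiv; exact: dP.
    have := ederiv_mul (ederiv_cst c Bh) (ederiv_mul eP (ederiv_cst c x)).
    move/ederiv_eq; apply.
    by rewrite mul0mx add0r mulmx0 addr0 /u !mulmxA BB.
  have gpos' : forall c, 0 <= c -> (c%:E < Tmax)%E -> 0 <= gx c.
    move=> c c0 cT.
    have -> : 0 = gx 0 by rewrite /gx F0 mulmx0 mul0mx mxE.
    apply: (@mono_of_deriv R gx (fun c => ((u c)^T *m (Gam N g *t (Aterm g alpha (H c) *m (Aterm g alpha (H c))^T)) *m u c) 0 0 + ((Bh *m (F c)^T *m u c)^T *m (Bh *m (F c)^T *m u c)) 0 0)) => //.
      apply: (continuous_subspaceW _ (eg 0 0)); exact: itv_sub_Ivl.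
    move=> d d0 dc; have dT : (d%:E < Tmax)%E by apply: le_lt_trans cT; rewrite lee_fin ltW.
    split; last first.
      apply: addr_ge0; last exact: sq_ge0.
      apply: tens_psd; exact: gam_psd.
    have eF : ederiv d F (F_rhs g Lam alpha (F d) (H d)) by apply: is_derive_ederiv; exact: dF.
    have := ederiv_mul (ederiv_mul (ederiv_tr (eU d d0 dT)) eF) (eU d d0 dT).
    move=> /(_ 0 0) h; apply: (is_derive_eq h).
    by rewrite /F_rhs -/V (@gderiv_alg _ _ Bh) // [LHS]mxE.
  move=> a b a0 ab bT.
  have ef : econt (Ivl Tmax) (fun s => (Phi s *m x)^T *m (Phi s *m x)) :=
    econt_mul (econt_tr (econt_mul cPe (econt_cst x))) (econt_mul cPe (econt_cst x)).
  apply: (@mono_of_deriv R (fun s => ((Phi s *m x)^T *m (Phi s *m x)) 0 0) (fun c => 2 * gx c)) => //.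
    apply: (continuous_subspaceW _ (ef 0 0)); exact: itv_sub_Ivl.
  move=> d ad db; have d0 : 0 < d := le_lt_trans a0 ad.
  have dT : (d%:E < Tmax)%E by apply: le_lt_trans bT; rewrite lee_fin ltW.
  split; last by apply: mulr_ge0 => //; apply: gpos' => //; exact: ltW.
  have eP : ederiv d Phi (Bh *m (F d)^T *m Bh *m Phi d) by apply: is_derive_ederiv; exact: dP.
  have := ederiv_mul (ederiv_tr (ederiv_mul eP (ederiv_cst d x))) (ederiv_mul eP (ederiv_cst d x)).
  move=> /(_ 0 0) h; apply: (is_derive_eq h).
  by rewrite mulmx0 addr0 -!(mulmxA _ (Phi d) x) (@fderiv_alg _ _ Bh (F d) _ BhT).
have uP : Phi tau \in unitmx.
  apply: cinj_unit => x hx; apply: sq_eq0.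
  have := key x 0 tau (lexx 0) (le_trans r0 rtau) tauT.
  rewrite P0 mul1mx hx trmx0 mul0mx => h; apply: (le_trans h); by rewrite mxE.
have enE : forall n (v : 'cV[R]_n), enorm v = Num.sqrt ((v^T *m v) 0 0).
  by move=> n v; rewrite sq_entry.
rewrite /opnorm; apply: ge_sup.
  exists (enorm (Phi r *m invmx (Phi tau) *m 0)); exists 0 => //=.
  by rewrite enE trmx0 mul0mx mxE sqrtr0 ler01.
move=> z [y hy <-].
have -> : Phi r *m invmx (Phi tau) *m y = Phi r *m (invmx (Phi tau) *m y) by rewrite mulmxA.
apply: le_trans hy.
rewrite !enE; apply: ler_wsqrtr.
have := key (invmx (Phi tau) *m y) r tau r0 rtau tauT.
by rewrite (mulKVmx uP).
Qed.
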